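(* With $\overline F_1$, $p$, $\beta$ as in the context, let $h:\overline F_1\to\overline F_1$ be the left $\mathrm{As}$-module map of degree $-1$ defined on free generators by $(\mathsf f_{i_1}\otimes\dots\otimes\mathsf f_{i_{k-1}}\otimes\mathsf f_{1})m^{(k)}.h=(\mathsf f_{i_1}\otimes\dots\otimes\mathsf f_{i_{k-2}}\otimes\mathsf f_{i_{k-1}+1})m^{(k-1)}$ if $k>1$, and $h=0$ on all other generators (those with $k=1$ or with last index $i_k\neq1$). Let $N=1-p\beta+h\partial+\partial h$ (diagrammatic composition). Then $N$ is a left $\mathrm{As}$-module map with $\mathsf f_n.N=0$ for all $n\ge1$, and for $k>1$: (i) $(\mathsf f_{i_1}\otimes\dots\otimes\mathsf f_{i_k})m^{(k)}.N=0$ if $i_k>2$; (ii) $(\mathsf f_{i_1}\otimes\dots\otimes\mathsf f_{i_{k-1}}\otimes\mathsf f_2)m^{(k)}.N=(1^{\otimes(i_1+\dots+i_{k-1})}\otimes m)(\mathsf f_{i_1}\otimes\dots\otimes\mathsf f_{i_{k-2}}\otimes\mathsf f_{i_{k-1}+1})m^{(k-1)}$; (iii) $(\mathsf f_{i_1}\otimes\dots\otimes\mathsf f_{i_{k-1}}\otimes\mathsf f_1)m^{(k)}.N=(1^{\otimes(i_1+\dots+i_{k-1}-1)}\otimes m)(\mathsf f_{i_1}\otimes\dots\otimes\mathsf f_{i_{k-1}})m^{(k-1)}$ if $i_{k-1}>1$; (iv) $(\mathsf f_{i_1}\otimes\dots\otimes\mathsf f_{i_{k-2}}\otimes\mathsf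 f_1\otimes\mathsf f_1)m^{(k)}.N=(1^{\otimes(i_1+\dots+i_{k-2})}\otimes m)(\mathsf f_{i_1}\otimes\dots\otimes\mathsf f_{i_{k-2}}\otimes\mathsf f_1)m^{(k-1)}$ if $(i_1,\dots,i_{k-2})\neq(1,\dots,1)$; (v) $\mathsf f_1^{\otimes k}m^{(k)}.N=(1^{\otimes(k-2)}\otimes m)\mathsf f_1^{\otimes(k-1)}m^{(k-1)}-m^{(k)}\mathsf f_1$. Consequently, if $\overline F_1^{(q)}$ denotes the left $\mathrm{As}$-submodule generated by the $(\mathsf f_{i_1}\otimes\dots\otimes\mathsf f_{i_k})m^{(k)}$ with $k\le q$ ($\overline F_1^{(0)}=0$), then $\overline F_1^{(q)}.N\subset\overline F_1^{(q-1)}$.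
   Context: $\Bbbk$ a commutative ring; Koszul signs; maps are applied on the right ($x.f$) and composed in diagrammatic order. $\mathrm{As}$ is the dg-operad with $\mathrm{As}(0)=0$, $\mathrm{As}(n)=\Bbbk m^{(n)}$ ($n\ge1$, degree 0), $m^{(1)}=1$ the unit, $m=m^{(2)}$, $(m^{(n_1)}\otimes\dots\otimes m^{(n_k)})m^{(k)}=m^{(n_1+\dots+n_k)}$. Left action of operad elements on a bimodule element $x$ of arity $k$ is written $(a_1\otimes\dots\otimes a_k)x$, right action $(x_1\otimes\dots\otimes x_k)b$. $\overline F_1=\mathrm{As}\odot\Bbbk\{\mathsf f_n\mid n\ge1\}\odot\mathrm{As}$ is the free $\mathrm{As}$-bimodule on $\mathsf f_n$ (arity $n$, degree $1-n$) with differential $\mathsf f_k\partial=\sum_{r+2+t=k}(-1)^t(1^{\otimes r}\otimes m\otimes1^{\otimes t})\mathsf f_{k-1}+\sum_{i+j=k,\ i,j\ge1}(-1)^j(\mathsf f_i\otimes\mathsf f_j)m$; as a left $\mathrm{As}$-module it is free on the elements $(\mathsf f_{i_1}\otimes\dots\otimes\mathsf f_{i_k})m^{(k)}$, $k\ge1$. $p:\overline F_1\to\mathrm{As}$ is the bimodule map with $\mathsf f_1\mapsto m^{(1)}$, $\mathsf f_n\mapsto0$ ($n\ge2$), so $(\mathsf f_{i_1}\otimes\dots\otimes\mathsf f_{i_k})m^{(k)}.p=m^{(k)}$ if all $i_s=1$ and $0$ otherwise; $\beta:\mathrm{As}\to\overline F_1$ is the left $\mathrm{As}$-module map $m^{(1)}\mapsto\mathsf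 f_1$. *)

(* Defs.v *)
From mathcomp Require Import all_boot all_order all_algebra.
Set Implicit Arguments. Unset Strict Implicit. Unset Printing Implicit Defensive.
Import GRing.Theory.
Local Open Scope ring_scope.

(* Concrete model of the free As-bimodule  Fbar_1 = As (.) k{f_n} (.) As.    *)
(* As a left As-module Fbar_1 is free on the generators                     *)
(*     (f_{i_1} (x) ... (x) f_{i_k}) m^(k),   k >= 1, i_s >= 1,              *)
(* so a k-basis of Fbar_1 consists of the elements                          *)
(*     (m^(n_1) (x) ... (x) m^(n_N)) (f_{i_1} (x) ... (x) f_{i_k}) m^(k)     *)
(* with N = i_1 + ... + i_k and all n_j >= 1.  Such a basis element is      *)
(* encoded by the pair (ns, is) = ([n_1;..;n_N], [i_1;..;i_k]).             *)
(* Its arity is n_1 + ... + n_N, its degree is k - N.                        *)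

Definition basisF := (seq nat * seq nat)%type.

Definition valid_basis (b : basisF) : bool :=
  [&& size b.2 > 0, all (fun i => (0 < i)%N) b.2, all (fun n => 0 < n)%N b.1
    & size b.1 == sumn b.2]%N.

(* The generator (f_{i_1} (x) .. (x) f_{i_k}) m^(k) = (1 (x) .. (x) 1)(..)m^(k).
   For k = 1 this is f_{i_1} itself (m^(1) is the unit). *)
Definition gen (ix : seq nat) : basisF := (nseq (sumn ix) 1%N, ix).

(* Elements of Fbar_1 (and of As) are finite formal k-linear combinations of
   basis elements; two formal combinations represent the same element iff
   they have the same coefficient function. *)
Definition fsum (R : Type) (B : Type) := seq (R * B)%type.

Section FormalSums.
Variables (R : comPzRingType) (B C : eqType).

Definition coef (x : fsum R B) (b : B) : R :=
  \sum_(t <- x | t.2 == b) t.1.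

Definition feq (x y : fsum R B) : Prop := forall b, coef x b = coef y b.

Definition fscale (D : Type) (r : R) (x : fsum R D) : fsum R D :=
  [seq (r * t.1, t.2) | t <- x].

Definition flift (f : B -> fsum R C) (x : fsum R B) : fsum R C :=
  flatten [seq fscale t.1 (f t.2) | t <- x].

End FormalSums.

Notation "x =f y" := (feq x y) (at level 70, no associativity).

Section Maps.
Variable R : comPzRingType.

Definition sgn (e : nat) : R := (-1) ^+ e.

(* merge entries q and q+1 of ns: composing with 1^{(x)q} (x) m (x) 1^{..} *)
Definition merge_at (ns : seq nat) (q : nat) : seq nat :=
  take q ns ++ (nth 0 ns q + nth 0 ns q.+1)%N :: drop q.+2 ns.

(* The differential of Fbar_1 on basis elements.  It is the (bimodule)
   derivation extending
     f_k d = sum_{r+2+t=k} (-1)^t (1^{(x)r} (x) m (x) 1^{(x)t}) f_{k-1}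
           + sum_{i+j=k, i,j>=1} (-1)^j (f_i (x) f_j) m,
   with Koszul signs for maps applied on the right: differentiating the
   factor f_{i_s} of (f_{i_1} (x) .. (x) f_{i_k}) m^(k) produces the sign
   (-1)^{|f_{i_{s+1}}| + .. + |f_{i_k}|}, |f_i| = 1 - i; As has degree 0. *)
Definition dF (b : basisF) : fsum R basisF :=
  let ns := b.1 in let ix := b.2 in
  flatten [seq
    let i := nth 0%N ix s in
    let P := sumn (take s ix) in
    let eps := sgn (sumn [seq (j - 1)%N | j <- drop s.+1 ix]) in
    [seq (eps * sgn (i - 2 - r)%N,
          (merge_at ns (P + r)%N, take s ix ++ (i - 1)%N :: drop s.+1 ix))
      | r <- iota 0 (i - 1)]
    ++
    [seq (eps * sgn (i - a)%N,
          (ns, take s ix ++ [:: a; (i - a)%N] ++ drop s.+1 ix))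
      | a <- iota 1 (i - 1)]
  | s <- iota 0 (size ix)].

(* The bimodule map p : Fbar_1 -> As, f_1 |-> m^(1), f_n |-> 0 (n >= 2).
   As(n) has basis m^(n), encoded by n. *)
Definition pF (b : basisF) : fsum R nat :=
  if all (fun i => (i == 1)%N) b.2 then [:: (1, sumn b.1)] else [::].

(* The left As-module map beta : As -> Fbar_1, m^(1) |-> f_1, so
   m^(n) |-> (m^(n)) f_1. *)
Definition betaF (n : nat) : fsum R basisF := [:: (1, ([:: n], [:: 1%N]))].

(* The left As-module map h of degree -1:
   (f_{i_1} .. f_{i_{k-1}} f_1) m^(k) |-> (f_{i_1} .. f_{i_{k-2}} f_{i_{k-1}+1}) m^(k-1)
   for k > 1, and 0 on the other generators; extended by (a g).h = a (g.h). *)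
Definition hF (b : basisF) : fsum R basisF :=
  let ix := b.2 in
  if (1 < size ix)%N && (last 0%N ix == 1%N)
  then [:: (1, (b.1, rcons (take (size ix - 2) ix)
                            (nth 0%N ix (size ix - 2)).+1))]
  else [::].

Definition NF (b : basisF) : fsum R basisF :=
  [:: (1, b)]
  ++ fscale (-1) (flift betaF (pF b))
  ++ flift dF (hF b)
  ++ flift hF (dF b).

(* Left action of (m^(c_1) (x) .. (x) m^(c_n)) on a basis element of arity n:
   (c)((a) g) = ((c)(a)) g, with (c)(a) computed in As by summing the c's
   over the consecutive blocks of sizes n_1, .., n_N. *)
Fixpoint block_sums (cs ns : seq nat) : seq nat :=
  match ns with
  | [::] => [::]
  | n :: ns' => sumn (take n cs) :: block_sums (drop n cs) ns'
  end.

Definition actF (cs : seq nat) (b : basisF) : basisF := (block_sums cs b.1, b.2).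

(* Fbar_1^(q): the left As-submodule generated by the generators
   (f_{i_1} .. f_{i_k}) m^(k) with k <= q, i.e. the set of finite sums
   sum_j r_j (c_j) g_j with g_j such a generator and (c_j) in As. *)
Definition inFq (q : nat) (x : fsum R basisF) : Prop :=
  exists s : seq (R * (seq nat * seq nat)),
    all (fun t => [&& (0 < size t.2.2)%N, (size t.2.2 <= q)%N,
                      all (fun i => (0 < i)%N) t.2.2,
                      all (fun c => (0 < c)%N) t.2.1
                    & size t.2.1 == sumn t.2.2]) s
    /\ x =f [seq (t.1, actF t.2.1 (gen t.2.2)) | t <- s].

End Maps.

(* Main.v *)
Require Import Defs.
From mathcomp Require Import all_boot all_order all_algebra.
From mathcomp Require Import ring zify.
Import GRing.Theory.
Local Open Scope ring_scope.
Set Implicit Arguments. Unset Strict Implicit.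


Definition fmap (R : comPzRingType) (B C : Type) (g : B -> C) (x : fsum R B) : fsum R C :=
  [seq (t.1, g t.2) | t <- x].

Lemma fc_nil (R : comPzRingType) (B : eqType) (b : B) : coef ([::] : fsum R B) b = 0.
Proof. by rewrite /coef big_nil. Qed.

Lemma fc_cons (R : comPzRingType) (B : eqType) (r : R) (b0 : B) (x : fsum R B) b :
  coef ((r, b0) :: x) b = (if b0 == b then r else 0) + coef x b.
Proof. by rewrite /coef big_cons /=; case: (b0 == b); rewrite ?add0r. Qed.

Lemma fc_cat (R : comPzRingType) (B : eqType) (x y : fsum R B) b :
  coef (x ++ y) b = coef x b + coef y b.
Proof. by rewrite /coef big_cat. Qed.

Lemma fc_fscale (R : comPzRingType) (B : eqType) (r : R) (x : fsum R B) b :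
  coef (fscale r x) b = r * coef x b.
Proof.
elim: x => [|[s d] x IH]; first by rewrite /fscale /= !fc_nil mulr0.
have -> : fscale r ((s, d) :: x) = (r * s, d) :: fscale r x by [].
rewrite !fc_cons IH mulrDr; case: (d == b); rewrite ?mulr0 //.
Qed.

Lemma fc_flatten (R : comPzRingType) (B : eqType) (L : seq (fsum R B)) b :
  coef (flatten L) b = \sum_(l <- L) coef l b.
Proof.
elim: L => [|l L IH]; first by rewrite big_nil fc_nil.
by rewrite /= fc_cat IH big_cons.
Qed.

Lemma fc_flift (R : comPzRingType) (B C : eqType) (f : B -> fsum R C) x c :
  coef (flift f x) c = \sum_(t <- x) t.1 * coef (f t.2) c.
Proof.
rewrite /flift fc_flatten big_map; apply: eq_bigr => t _; exact: fc_fscale.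
Qed.

Lemma fc_fmap (R : comPzRingType) (B C : eqType) (g : B -> C) (x : fsum R B) c :
  coef (fmap g x) c = \sum_(t <- x) t.1 * (if g t.2 == c then 1 else 0).
Proof.
elim: x => [|[s d] x IH]; first by rewrite big_nil fc_nil.
have -> : fmap g ((s, d) :: x) = (s, g d) :: fmap g x by [].
rewrite fc_cons IH big_cons /=.
by case: (g d == c); rewrite ?mulr1 ?mulr0.
Qed.

Lemma sum_coef (R : comPzRingType) (B : eqType) (F : B -> R) (x : fsum R B) s :
  uniq s -> {subset [seq t.2 | t <- x] <= s} ->
  \sum_(t <- x) t.1 * F t.2 = \sum_(b <- s) coef x b * F b.
Proof.
move=> us; elim: x => [|[r b0] x IH] sub.
  by rewrite big_nil big1 // => b _; rewrite fc_nil mul0r.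
have b0s : b0 \in s by apply: sub; rewrite inE eqxx.
rewrite big_cons IH; last by move=> y yx; apply: sub; rewrite inE yx orbT.
have -> : \sum_(b <- s) coef ((r, b0) :: x) b * F b =
  \sum_(b <- s) (if b0 == b then r else 0) * F b + \sum_(b <- s) coef x b * F b.
  by rewrite -big_split; apply: eq_bigr => b _; rewrite fc_cons mulrDl.
congr (_ + _).
rewrite (bigD1_seq b0) //= eqxx big1 ?addr0 // => b nb.
by rewrite eq_sym (negbTE nb) mul0r.
Qed.

Lemma feq_sum (R : comPzRingType) (B : eqType) (F : B -> R) (x y : fsum R B) :
  x =f y -> \sum_(t <- x) t.1 * F t.2 = \sum_(t <- y) t.1 * F t.2.
Proof.
move=> H; set s := undup ([seq t.2 | t <- x] ++ [seq t.2 | t <- y]).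
have us : uniq s by apply: undup_uniq.
rewrite (sum_coef F us) ?(sum_coef F us); first by apply: eq_bigr => b _; rewrite H.
  by move=> b bx; rewrite mem_undup mem_cat bx orbT.
by move=> b bx; rewrite mem_undup mem_cat bx.
Qed.

Lemma flift_feq (R : comPzRingType) (B C : eqType) (f : B -> fsum R C) x y :
  x =f y -> flift f x =f flift f y.
Proof. by move=> H c; rewrite !fc_flift (feq_sum (fun b => coef (f b) c) H). Qed.

Lemma fmap_feq (R : comPzRingType) (B C : eqType) (g : B -> C) (x y : fsum R B) :
  x =f y -> fmap g x =f fmap g y.
Proof. by move=> H c; rewrite !fc_fmap (feq_sum (fun b => if g b == c then 1 else 0) H). Qed.

Lemma fscale_feq (R : comPzRingType) (B : eqType) r (x y : fsum R B) :
  x =f y -> fscale r x =f fscale r y.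
Proof. by move=> H c; rewrite !fc_fscale H. Qed.

Lemma feq_refl (R : comPzRingType) (B : eqType) (x : fsum R B) : x =f x.
Proof. by []. Qed.
Lemma feq_sym (R : comPzRingType) (B : eqType) (x y : fsum R B) : x =f y -> y =f x.
Proof. by move=> H c. Qed.
Lemma feq_trans (R : comPzRingType) (B : eqType) (x y z : fsum R B) : x =f y -> y =f z -> x =f z.
Proof. by move=> H1 H2 c; rewrite H1. Qed.
Lemma feq_cat (R : comPzRingType) (B : eqType) (x y x' y' : fsum R B) :
  x =f x' -> y =f y' -> x ++ y =f x' ++ y'.
Proof. by move=> H1 H2 c; rewrite !fc_cat H1 H2. Qed.

Lemma flift_cat (R : comPzRingType) (B C : eqType) (f : B -> fsum R C) x y :
  flift f (x ++ y) = flift f x ++ flift f y.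
Proof. by rewrite /flift map_cat flatten_cat. Qed.

Lemma fscale_fscale (R : comPzRingType) (D : Type) (r s : R) (x : fsum R D) :
  fscale r (fscale s x) = fscale (r * s) x.
Proof. by rewrite /fscale -map_comp; apply: eq_map => t /=; rewrite mulrA. Qed.

Lemma fscale_cat (R : comPzRingType) (D : Type) (r : R) (x y : fsum R D) :
  fscale r (x ++ y) = fscale r x ++ fscale r y.
Proof. by rewrite /fscale map_cat. Qed.

Lemma fscale_flatten (R : comPzRingType) (D : Type) (r : R) (L : seq (fsum R D)) :
  fscale r (flatten L) = flatten (map (fscale r) L).
Proof. by rewrite /fscale map_flatten. Qed.

Lemma flift_fscale (R : comPzRingType) (B C : eqType) (f : B -> fsum R C) r x :
  flift f (fscale r x) = fscale r (flift f x).
Proof.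
rewrite /flift fscale_flatten -!map_comp /=; congr flatten; apply: eq_map => t /=.
by rewrite fscale_fscale.
Qed.

Lemma flift_fmap (R : comPzRingType) (B C D : eqType) (f : C -> fsum R D) (g : B -> C) x :
  flift f (fmap g x) = flift (fun b => f (g b)) x.
Proof. by rewrite /flift /fmap -map_comp. Qed.

Lemma fmap_fscale (R : comPzRingType) (B C : Type) (g : B -> C) r (x : fsum R B) :
  fmap g (fscale r x) = fscale r (fmap g x).
Proof. by rewrite /fmap /fscale -!map_comp. Qed.

Lemma fmap_flift (R : comPzRingType) (B C D : eqType) (f : B -> fsum R C) (g : C -> D) x :
  fmap g (flift f x) = flift (fun b => fmap g (f b)) x.
Proof.
rewrite /flift /fmap map_flatten -map_comp; congr flatten; apply: eq_map => t /=.
exact: fmap_fscale.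
Qed.

Lemma flift_map (R : comPzRingType) (T : Type) (B C : eqType) (f : B -> fsum R C)
   (c : T -> R) (d : T -> B) (s : seq T) :
  flift f [seq (c i, d i) | i <- s] = flatten [seq fscale (c i) (f (d i)) | i <- s].
Proof. by rewrite /flift -map_comp. Qed.

Lemma flift_map0 (R : comPzRingType) (T : eqType) (B C : eqType) (f : B -> fsum R C)
   (c : T -> R) (d : T -> B) (s : seq T) :
  (forall i, i \in s -> f (d i) = [::]) -> flift f [seq (c i, d i) | i <- s] = [::].
Proof.
rewrite flift_map; elim: s => //= i s IH H.
rewrite H ?inE ?eqxx // IH // => j js; apply: H; rewrite inE js orbT.
by [].
Qed.


Lemma merge_at_cons (x : nat) s q : merge_at (x :: s) q.+1 = x :: merge_at s q.
Proof. by []. Qed.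

Lemma merge_block cs ns q : merge_at (block_sums cs ns) q = block_sums cs (merge_at ns q).
Proof.
elim: ns cs q => [|n ns IH] cs [|q].
- by rewrite /merge_at /= addn0 take0.
- by rewrite /merge_at /= addn0 take0.
- case: ns IH => [|m ns] IH; first by rewrite /merge_at /= !addn0.
  by rewrite /merge_at /= takeD sumn_cat drop_drop !drop0 [(m + n)%N]addnC.
- by rewrite merge_at_cons /= -IH.
Qed.

Lemma sumn_block cs ns : sumn (block_sums cs ns) = sumn (take (sumn ns) cs).
Proof.
elim: ns cs => [|n ns IH] cs /=; first by rewrite take0.
by rewrite IH takeD sumn_cat.
Qed.

Lemma size_block cs ns : size (block_sums cs ns) = size ns.
Proof. by elim: ns cs => //= n ns IH cs; rewrite IH. Qed.

Lemma flift_ext (R : comPzRingType) (B C : eqType) (f f' : B -> fsum R C) x :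
  (forall b, f b = f' b) -> flift f x = flift f' x.
Proof. by move=> H; rewrite /flift; congr flatten; apply: eq_map => t; rewrite H. Qed.

Lemma dF_act (R : comPzRingType) cs b : dF R (actF cs b) = fmap (actF cs) (dF R b).
Proof.
case: b => ns ix; rewrite /dF /actF /fmap /= map_flatten -map_comp; congr flatten.
apply: eq_map => s /=; rewrite map_cat -!map_comp; congr (_ ++ _).
by apply: eq_map => r /=; rewrite merge_block.
Qed.

Lemma hF_act (R : comPzRingType) cs b : hF R (actF cs b) = fmap (actF cs) (hF R b).
Proof. by case: b => ns ix; rewrite /hF /actF /=; case: ifP. Qed.

Lemma fmap_cat (R : comPzRingType) (B C : Type) (g : B -> C) (x y : fsum R B) :
  fmap g (x ++ y) = fmap g x ++ fmap g y.
Proof. exact: map_cat. Qed.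

Lemma NF_act (R : comPzRingType) cs b : NF R (actF cs b) = fmap (actF cs) (NF R b).
Proof.
rewrite /NF !fmap_cat; congr (_ ++ _ ++ _ ++ _).
- case: b => ns ix; rewrite /pF /actF /=; case: ifP => _ //=.
  by rewrite sumn_block.
- rewrite hF_act flift_fmap fmap_flift; apply: flift_ext => b'; exact: dF_act.
- rewrite dF_act flift_fmap fmap_flift; apply: flift_ext => b'; exact: hF_act.
Qed.

Lemma flift_single (R : comPzRingType) (B C : eqType) (g : B -> C) (x : fsum R B) :
  flift (fun b => [:: (1, g b)]) x = fmap g x.
Proof. by rewrite /flift /fmap; elim: x => //= [[r b] x] IH; rewrite mulr1 IH. Qed.


Definition appx (x : nat) (b : basisF) : basisF := (b.1, rcons b.2 x).

Definition Lm (R : comPzRingType) (ns u : seq nat) (x : nat) : fsum R basisF :=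
  [seq (sgn R (x - 2 - r), (merge_at ns (sumn u + r)%N, rcons u (x - 1)%N)) | r <- iota 0 (x - 1)%N].
Definition Ls (R : comPzRingType) (ns u : seq nat) (x : nat) : fsum R basisF :=
  [seq (sgn R (x - a), (ns, u ++ [:: a; (x - a)%N])) | a <- iota 1 (x - 1)%N].

Lemma sgnD (R : comPzRingType) m n : sgn R (m + n) = sgn R m * sgn R n.
Proof. by rewrite /sgn exprD. Qed.

Lemma take_rcons' (T : Type) (u : seq T) x s : (s <= size u)%N -> take s (rcons u x) = take s u.
Proof. by move=> h; rewrite -cats1 takel_cat. Qed.

Lemma dF_rcons (R : comPzRingType) ns u x :
  dF R (ns, rcons u x) =
  fscale (sgn R (x - 1)) (fmap (appx x) (dF R (ns, u))) ++ (Lm R ns u x ++ Ls R ns u x).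
Proof.
rewrite /dF /= size_rcons -(addn1 (size u)) iotaD map_cat flatten_cat /= add0n cats0.
congr (_ ++ _).
  rewrite /fmap map_flatten fscale_flatten -!map_comp; congr flatten.
  apply/eq_in_map => s; rewrite mem_iota add0n => /andP [_ hs] /=.
  rewrite nth_rcons hs take_rcons' ?(ltnW hs) // drop_rcons // map_rcons sumn_rcons sgnD.
  rewrite map_cat fscale_cat /fscale -!map_comp; congr (_ ++ _).
    apply: eq_map => r /=; congr (_, (_, _)); first by ring.
    by rewrite /= rcons_cat.
  apply: eq_map => a /=; congr (_, (_, _)); first by ring.
  by rewrite /= rcons_cat.
rewrite nth_rcons ltnn eqxx take_rcons' // take_size drop_oversize ?size_rcons //=.
have s0 : sgn R 0 = 1 by rewrite /sgn expr0.
rewrite /Lm /Ls s0; congr (_ ++ _); apply: eq_map => r /=; rewrite ?mul1r //.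
by rewrite cats1.
Qed.


Lemma cat2 (T : Type) (u : seq T) a b : u ++ [:: a; b] = rcons (rcons u a) b.
Proof. by rewrite -!cats1 -catA. Qed.

Lemma hF_rr1 (R : comPzRingType) ns v a :
  hF R (ns, rcons (rcons v a) 1%N) = [:: (1, (ns, rcons v a.+1))].
Proof.
rewrite /hF /= !size_rcons last_rcons eqxx /= !subSS subn0.
by rewrite -!cats1 -catA take_size_cat // nth_cat ltnn subnn.
Qed.

Lemma hF_ne1 (R : comPzRingType) ns w y : y != 1%N -> hF R (ns, rcons w y) = [::].
Proof. by move=> h; rewrite /hF /= last_rcons (negbTE h) andbF. Qed.

Lemma hF_single (R : comPzRingType) ns y : hF R (ns, [:: y]) = [::].
Proof. by []. Qed.

Lemma flift_nilf (R : comPzRingType) (B C : eqType) (x : fsum R B) :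
  flift (fun _ => ([::] : fsum R C)) x = [::].
Proof. by elim: x. Qed.

Lemma pF_ne1 (R : comPzRingType) ns w y : y != 1%N -> pF R (ns, rcons w y) = [::].
Proof. by move=> h; rewrite /pF /= all_rcons (negbTE h). Qed.

Lemma sgn1 (R : comPzRingType) : sgn R 1 = -1.
Proof. by rewrite /sgn expr1. Qed.
Lemma sgn0 (R : comPzRingType) : sgn R 0 = 1.
Proof. by rewrite /sgn expr0. Qed.
Lemma sgnS (R : comPzRingType) n : sgn R n.+1 = - sgn R n.
Proof. by rewrite /sgn exprS mulN1r. Qed.

Lemma Ls_hF (R : comPzRingType) ns u x : (2 <= x)%N ->
  flift (hF R) (Ls R ns u x) = [:: (-1, (ns, rcons u x))].
Proof.
move=> hx; rewrite /Ls.
have -> : (x - 1 = (x - 2) + 1)%N by lia.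
rewrite iotaD map_cat flift_cat flift_map0.
  have e1 : (1 + (x - 2) = x - 1)%N by lia.
  have e2 : (x - (x - 1) = 1)%N by lia.
  have e3 : (x - 1).+1 = x by lia.
  by rewrite /= e1 e2 cat2 /flift /= hF_rr1 /= sgn1 mulr1 e3.
move=> a; rewrite mem_iota => /andP [ha1 ha2]; rewrite cat2 hF_ne1 //.
apply/eqP; lia.
Qed.

Lemma NF_ge2 (R : comPzRingType) ns u x : (2 <= x)%N ->
  NF R (ns, rcons u x) =f flift (hF R) (Lm R ns u x).
Proof.
move=> hx; have nx : x != 1%N by apply/eqP; lia.
rewrite /NF pF_ne1 // hF_ne1 // dF_rcons !flift_cat flift_fscale flift_fmap.
have -> : flift (fun e => hF R (appx x e)) (dF R (ns, u)) = [::].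
  rewrite (@flift_ext _ _ _ _ (fun _ => [::])) ?flift_nilf //.
  by case=> e1 e2; rewrite /appx /= hF_ne1.
rewrite Ls_hF // => c.
rewrite !fc_cat !fc_cons !fc_nil /=.
by case: ((ns, rcons u x) == c) => /=; ring.
Qed.

Lemma flift_map1 (R : comPzRingType) (T B C : eqType) (f : B -> fsum R C)
   (c : T -> R) (d : T -> B) (e : T -> C) (s : seq T) :
  (forall i, i \in s -> f (d i) = [:: (1, e i)]) ->
  flift f [seq (c i, d i) | i <- s] = [seq (c i, e i) | i <- s].
Proof.
rewrite flift_map; elim: s => //= i s IH H.
rewrite H ?inE ?eqxx //= mulr1 IH // => j js; apply: H; rewrite inE js orbT //.
Qed.

Lemma fc_cancel (R : comPzRingType) (T B : eqType) (f g : T -> R) (d : T -> B) (s : seq T) c :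
  (forall t, t \in s -> f t = - g t) ->
  coef [seq (f t, d t) | t <- s] c + coef [seq (g t, d t) | t <- s] c = 0.
Proof.
elim: s => [|t s IH] H /=; first by rewrite !fc_nil addr0.
have H' : forall j, j \in s -> f j = - g j.
  by move=> j js; apply: H; rewrite inE js orbT.
have h := IH H'.
rewrite !fc_cons H ?inE ?eqxx //.
by case: (d t == c) => /=; rewrite -[RHS]h; ring.
Qed.

Lemma Lm_split (R : comPzRingType) ns v a : (1 <= a)%N ->
  Lm R ns v a.+1 =
  [seq (- sgn R (a - 2 - r), (merge_at ns (sumn v + r)%N, rcons v a)) | r <- iota 0 (a - 1)]
  ++ [:: (1, (merge_at ns (sumn v + (a - 1))%N, rcons v a))].
Proof.
move=> ha; rewrite /Lm.
have -> : (a.+1 - 1 = (a - 1) + 1)%N by lia.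
rewrite iotaD map_cat; congr (_ ++ _).
  apply/eq_in_map => r; rewrite mem_iota => /andP [_ hr].
  have -> : (a.+1 - 2 - r = (a - 2 - r).+1)%N by lia.
  by rewrite sgnS; congr (_, (_, rcons _ _)); lia.
rewrite /= add0n.
have -> : (a.+1 - 2 - (a - 1) = 0)%N by lia.
by rewrite sgn0; congr [:: (_, (_, rcons _ _))]; lia.
Qed.

Lemma LmI (R : comPzRingType) ns v a : (1 <= a)%N ->
  flift (fun e => hF R (appx 1 e)) (Lm R ns v a) =
  [seq (sgn R (a - 2 - r), (merge_at ns (sumn v + r)%N, rcons v a)) | r <- iota 0 (a - 1)].
Proof.
move=> ha; rewrite /Lm; apply: flift_map1 => r _.
by rewrite /appx /= hF_rr1; congr [:: (_, (_, rcons _ _))]; lia.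
Qed.

Lemma Ls_split (R : comPzRingType) ns v a : (1 <= a)%N ->
  Ls R ns v a.+1 =
  [seq (- sgn R (a - b), (ns, rcons (rcons v b) (a - b).+1)) | b <- iota 1 (a - 1)]
  ++ [:: (-1, (ns, rcons (rcons v a) 1%N))].
Proof.
move=> ha; rewrite /Ls.
have -> : (a.+1 - 1 = (a - 1) + 1)%N by lia.
rewrite iotaD map_cat; congr (_ ++ _).
  apply/eq_in_map => b; rewrite mem_iota => /andP [hb1 hb2].
  have e : (a.+1 - b = (a - b).+1)%N by lia.
  by rewrite e sgnS cat2.
have e1 : (1 + (a - 1) = a)%N by lia.
have e2 : (a.+1 - a = 1)%N by lia.
by rewrite e1 /= e2 sgn1 cat2.
Qed.

Lemma LsI (R : comPzRingType) ns v a : (1 <= a)%N ->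
  flift (fun e => hF R (appx 1 e)) (Ls R ns v a) =
  [seq (sgn R (a - b), (ns, rcons (rcons v b) (a - b).+1)) | b <- iota 1 (a - 1)].
Proof.
move=> ha; rewrite /Ls; apply: flift_map1 => b _.
by rewrite /appx /= cat2 hF_rr1.
Qed.

Lemma hF_appx (R : comPzRingType) a (x : fsum R basisF) :
  flift (fun e => hF R (appx 1 (appx a e))) x = fmap (appx a.+1) x.
Proof.
rewrite /flift /fmap; elim: x => // [[r [e1 e2]]] x IH.
rewrite map_cons /= IH /appx. 
by rewrite (hF_rr1 R e1 e2 a) /= mulr1.
Qed.

Lemma NF_1 (R : comPzRingType) ns v a : (1 <= a)%N ->
  NF R (ns, rcons (rcons v a) 1%N) =f
  (1, (merge_at ns (sumn v + (a - 1))%N, rcons v a))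
    :: fscale (-1) (flift (betaF R) (pF R (ns, rcons (rcons v a) 1%N))).
Proof.
move=> ha c.
rewrite /NF hF_rr1.
have -> : forall e, flift (dF R) [:: (1, e)] = fscale 1 (dF R e) ++ [::] by [].
rewrite (dF_rcons R ns v a.+1) (dF_rcons R ns (rcons v a) 1%N).
have -> : Lm R ns (rcons v a) 1 = [::] by rewrite /Lm subnn.
have -> : Ls R ns (rcons v a) 1 = [::] by rewrite /Ls subnn.
rewrite !flift_cat flift_fscale flift_fmap (dF_rcons R ns v a) !flift_cat flift_fscale flift_fmap.
rewrite hF_appx.
rewrite !flift_single LmI // LsI // Lm_split // Ls_split //.
rewrite !fc_cat !fc_cons !fc_fscale !fc_nil !fc_cat !fc_cons !fc_nil.
have E1 := @fc_cancel R _ _ (fun r => - sgn R (a - 2 - r)) (fun r => sgn R (a - 2 - r))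
   (fun r => (merge_at ns (sumn v + r)%N, rcons v a)) (iota 0 (a - 1)) c (fun _ _ => erefl).
have E2 := @fc_cancel R _ _ (fun b => - sgn R (a - b)) (fun b => sgn R (a - b))
   (fun b => (ns, rcons (rcons v b) (a - b).+1)) (iota 1 (a - 1)) c (fun _ _ => erefl).
move: E1 E2.
set A1 := coef [seq _ | _ <- iota 0 _] c.
set A2 := coef [seq _ | _ <- iota 0 _] c.
set B1 := coef [seq _ | _ <- iota 1 _] c.
set B2 := coef [seq _ | _ <- iota 1 _] c.
move=> E1 E2.
have ea : sgn R (a.+1 - 1) = - sgn R (a - 1).
  have -> : (a.+1 - 1 = (a - 1).+1)%N by lia.
  exact: sgnS.
rewrite subnn sgn0 ea !fc_fscale.
have {}E1 : A2 = - A1 by apply/eqP; rewrite -addr_eq0 addrC E1.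
have {}E2 : B2 = - B1 by apply/eqP; rewrite -addr_eq0 addrC E2.
rewrite E1 E2.
case: ((ns, rcons (rcons v a) 1%N) == c); case: (_ == c) => /=; ring.
Qed.


Lemma merge_nseq n : merge_at (nseq n.+2 1%N) n = rcons (nseq n 1%N) 2%N.
Proof.
elim: n => [|n IH]; first by rewrite /merge_at.
by rewrite [nseq _ _]/= merge_at_cons IH.
Qed.

Lemma rcons_nseq (T : Type) n (x : T) : rcons (nseq n x) x = nseq n.+1 x.
Proof. by elim: n => //= n ->. Qed.

Lemma Lm_nil_hF (R : comPzRingType) ns x : flift (hF R) (Lm R ns [::] x) = [::].
Proof. by rewrite /Lm; apply: flift_map0 => r _; rewrite hF_single. Qed.

Lemma conj1 (R : comPzRingType) (b : basisF) (cs : seq nat) :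
  NF R (actF cs b) =f flift (fun b' => [:: (1 : R, actF cs b')]) (NF R b).
Proof. by rewrite NF_act flift_single. Qed.

Lemma conj2 (R : comPzRingType) n : (0 < n)%N -> NF R (gen [:: n]) =f [::].
Proof.
move=> hn; rewrite /gen /= addn0.
case: n hn => [//|[|n]] _.
  move=> c; rewrite /NF /=.
  have -> : dF R ([:: 1%N], [:: 1%N]) = [::].
    by rewrite (dF_rcons R _ [::] 1) /Lm /Ls subnn.
  rewrite !fc_cons fc_nil /= addn0; case: (_ == c); rewrite /=; ring.
have H := @NF_ge2 R (nseq n.+2 1%N) [::] (n.+2) isT.
by move=> c; rewrite H Lm_nil_hF.
Qed.

Lemma conj3 (R : comPzRingType) (ix : seq nat) :
  (1 < size ix)%N -> all (fun i => (0 < i)%N) ix -> (2 < last 0%N ix)%N ->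
  NF R (gen ix) =f [::].
Proof.
case/lastP: ix => [//|u x]; rewrite last_rcons => _ _ hx.
have hx2 : (2 <= x)%N by lia.
apply: feq_trans (@NF_ge2 R _ u x hx2) _.
rewrite /Lm flift_map0 // => r _; apply: hF_ne1; apply/eqP; lia.
Qed.

Lemma conj4 (R : comPzRingType) (js : seq nat) (a : nat) :
  all (fun i => (0 < i)%N) js -> (0 < a)%N ->
  NF R (gen (js ++ [:: a; 2%N]))
    =f [:: (1, (rcons (nseq (sumn js + a) 1%N) 2%N, rcons js a.+1))].
Proof.
move=> _ ha; rewrite /gen cat2.
apply: feq_trans (@NF_ge2 R _ _ 2 isT) _.
rewrite /Lm (_ : (2 - 1 = 1)%N) //= /flift /= hF_rr1 /= (_ : (2 - 2 - 0 = 0)%N) //.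
rewrite sgn0 !mulr1 !sumn_rcons addn0 (_ : (sumn js + a + 2 = (sumn js + a).+2)%N); last by lia.
rewrite merge_nseq; exact: feq_refl.
Qed.


Lemma conj5 (R : comPzRingType) (js : seq nat) (a : nat) :
  all (fun i => (0 < i)%N) js -> (1 < a)%N ->
  NF R (gen (js ++ [:: a; 1%N]))
    =f [:: (1, (rcons (nseq (sumn js + a - 1) 1%N) 2%N, rcons js a))].
Proof.
move=> _ ha; rewrite /gen cat2.
have ha1 : (1 <= a)%N by lia.
apply: feq_trans (NF_1 R _ js ha1) _.
have -> : pF R (nseq (sumn (rcons (rcons js a) 1%N)) 1%N, rcons (rcons js a) 1%N) = [::].
  by rewrite /pF /= !all_rcons (_ : (a == 1%N) = false) ?andbF //; apply/eqP; lia.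
rewrite !sumn_rcons (_ : (sumn js + a + 1 = (sumn js + (a - 1)).+2)%N); last by lia.
rewrite merge_nseq (_ : (sumn js + a - 1 = sumn js + (a - 1))%N); last by lia.
by move=> c.
Qed.

Lemma conj6 (R : comPzRingType) (js : seq nat) :
  all (fun i => (0 < i)%N) js -> ~~ all (fun i => (i == 1)%N) js ->
  NF R (gen (js ++ [:: 1%N; 1%N]))
    =f [:: (1, (rcons (nseq (sumn js) 1%N) 2%N, rcons js 1%N))].
Proof.
move=> _ hn; rewrite /gen cat2.
apply: feq_trans (NF_1 R _ js (isT : (1 <= 1)%N)) _.
have -> : pF R (nseq (sumn (rcons (rcons js 1%N) 1%N)) 1%N, rcons (rcons js 1%N) 1%N) = [::].
  by rewrite /pF /= !all_rcons (negbTE hn).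
rewrite !sumn_rcons (_ : (sumn js + 1 + 1 = (sumn js + (1 - 1)).+2)%N); last by lia.
rewrite merge_nseq subnn addn0; by move=> c.
Qed.

Lemma conj7 (R : comPzRingType) (k : nat) : (1 < k)%N ->
  NF R (gen (nseq k 1%N))
    =f [:: (1, (rcons (nseq (k - 2) 1%N) 2%N, nseq (k - 1) 1%N));
           (-1, ([:: k], [:: 1%N]))].
Proof.
move=> hk.
have ek : nseq k 1%N = rcons (rcons (nseq (k - 2) 1%N) 1%N) 1%N.
  by rewrite !rcons_nseq; congr nseq; lia.
rewrite /gen sumn_nseq mul1n {2}ek.
apply: feq_trans (NF_1 R _ _ (isT : (1 <= 1)%N)) _.
rewrite /pF /= !all_rcons /= all_nseq /= orbT sumn_nseq mul1n.
rewrite subnn addn0 sumn_nseq mul1n rcons_nseq.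
rewrite (_ : k = (k - 2).+2) ?merge_nseq; last by lia.
rewrite (_ : (k - 2).+2 - 2 = k - 2)%N; last by lia.
rewrite (_ : (k - 2).+2 - 1 = (k - 2).+1)%N; last by lia.
rewrite /= !mulr1 -(merge_nseq (k - 2)); by move=> c.
Qed.


Definition Yf (R : comPzRingType) (v : seq nat) (a x : nat) : fsum R basisF :=
  if (2 < x)%N then [::]
  else if x == 2%N then [:: (1, (rcons (nseq (sumn v + a) 1%N) 2%N, rcons v a.+1))]
  else (1, (rcons (nseq (sumn v + a - 1) 1%N) 2%N, rcons v a))
       :: (if all (fun i => i == 1%N) v && (a == 1%N)
           then [:: (-1, ([:: (sumn v + 2)%N], [:: 1%N]))] else [::]).

Definition Y (R : comPzRingType) (ix : seq nat) : fsum R basisF :=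
  match rev ix with x :: a :: rv => Yf R (rev rv) a x | _ => [::] end.

Lemma Y_rr (R : comPzRingType) v a x : Y R (rcons (rcons v a) x) = Yf R v a x.
Proof. by rewrite /Y !rev_rcons revK. Qed.

Lemma NF_gen_Y (R : comPzRingType) ix :
  all (fun i => (0 < i)%N) ix -> (0 < size ix)%N -> NF R (gen ix) =f Y R ix.
Proof.
case/lastP: ix => [//|u x]; case/lastP: u => [|v a].
  by move=> hp _; apply: conj2; move: hp => /= /andP [].
rewrite Y_rr /Yf !all_rcons => /and3P [hx ha hv] _.
case: ifP => h2.
  by apply: conj3; rewrite ?size_rcons ?last_rcons ?all_rcons ?hx ?ha ?hv.
case: ifP => h2'.
  by move/eqP: h2' => ->; rewrite -cat2; apply: conj4.
have -> : x = 1%N by move/negbT: h2; move/negbT: h2'; lia.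
case: (ltngtP a 1) => [|ha1|ea]; first by lia.
  by rewrite andbF -cat2; apply: conj5.
subst a; rewrite andbT; case: ifP => hall.
  have ev := all_pred1P 1%N v hall.
  set n := size v in ev.
  have -> : rcons (rcons v 1%N) 1%N = nseq n.+2 1%N by rewrite ev !rcons_nseq.
  apply: feq_trans (conj7 R (isT : (1 < n.+2)%N)) _.
  rewrite ev sumn_nseq mul1n (_ : (n.+2 - 2 = n)%N); last by lia.
  rewrite (_ : (n + 1 - 1 = n)%N); last by lia.
  rewrite (_ : (n.+2 - 1 = n.+1)%N); last by lia.
  by rewrite rcons_nseq (_ : (n + 2 = n.+2)%N) //; last by lia.
rewrite -cat2; apply: feq_trans (conj6 R hv _) _; first by rewrite hall.
by rewrite addnK.
Qed.

Lemma Y_props (R : comPzRingType) ix y :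
  all (fun i => (0 < i)%N) ix -> y \in Y R ix ->
  (0 < size y.2.2)%N /\ (size y.2.2 < size ix)%N /\ all (fun i => (0 < i)%N) y.2.2 /\
      all (fun i => (0 < i)%N) y.2.1 /\ size y.2.1 = sumn y.2.2 /\ sumn y.2.1 = sumn ix.
Proof.
case/lastP: ix => [//|u x]; case/lastP: u => [//|v a].
rewrite Y_rr /Yf !all_rcons => /and3P [hx ha hv].
case: ifP => // h2; case: ifP => h2'.
  rewrite inE => /eqP -> /=.
  rewrite !size_rcons !all_rcons hv all_nseq orbT size_nseq !sumn_rcons sumn_nseq.
  move/eqP: h2' => ->; do !split => //; lia.
have x1 : x = 1%N by move/negbT: h2; move/negbT: h2'; lia.
subst x; rewrite inE => /orP [/eqP -> /=|].
  rewrite !size_rcons !all_rcons hv ha all_nseq orbT size_nseq !sumn_rcons sumn_nseq.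
  do !split => //; lia.
case: ifP => //= /andP [_ /eqP ->]; rewrite inE => /eqP -> /=.
rewrite !size_rcons !sumn_rcons; do !split => //; lia.
Qed.

Lemma actF_gen cs ix : size cs = sumn ix -> actF cs (gen ix) = (cs, ix).
Proof.
move=> h; rewrite /actF /gen /= -h; congr (_, _).
by elim: cs {h} => //= c cs IH; rewrite take0 drop0 IH addn0.
Qed.

Lemma block_pos cs ns :
  all (fun c => (0 < c)%N) cs -> all (fun n => (0 < n)%N) ns -> (sumn ns <= size cs)%N ->
  all (fun c => (0 < c)%N) (block_sums cs ns).
Proof.
elim: ns cs => //= n ns IH cs hc /andP [hn hns] hs.
apply/andP; split.
  case: cs hc hs => [|c cs] /=; first by lia.
  case: n hn {hns} => // n _ /andP [hc _] _ /=; lia.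
apply: IH => //; last by rewrite size_drop; lia.
by apply/allP => c /mem_drop hcs; move/allP: hc; apply.
Qed.

Lemma conj8 (R : comPzRingType) (q : nat) (x : fsum R basisF) :
  (0 < q)%N -> inFq q x -> inFq q.-1 (flift (NF R) x).
Proof.
move=> hq [s [Hs Hx]].
exists (flatten [seq [seq (t.1 * y.1, (block_sums t.2.1 y.2.1, y.2.2)) | y <- Y R t.2.2] | t <- s]).
split.
  apply/allP => u /flattenP [l /mapP [t ts ->]] /mapP [y yY ->] /=.
  move/allP: Hs => /(_ t ts) /and5P [h1 h2 h3 h4 /eqP h5].
  have [p1 [p2 [p3 [p4 [p5 p6]]]]] := Y_props h3 yY.
  rewrite p1 p3 /= size_block p5 eqxx andbT.
  have hlt : (size y.2.2 < q)%N by apply: leq_trans p2 h2.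
  apply/andP; split; first by case: (q) hq hlt.
  by apply: block_pos => //; rewrite p6 h5.
move=> c; rewrite (flift_feq (NF R) Hx c) flift_map.
rewrite map_flatten -map_comp !fc_flatten !big_map.
apply: eq_big_seq => t ts; cbv beta.
move/allP: Hs => /(_ t ts) /and5P [h1 h2 h3 h4 /eqP h5].
rewrite NF_act fc_fscale (fmap_feq (actF t.2.1) (NF_gen_Y R h3 h1) c) -fc_fscale.
congr coef; rewrite /fscale /fmap -!map_comp /= -map_comp; apply/eq_in_map => y yY /=.
have [p1 [p2 [p3 [p4 [p5 p6]]]]] := Y_props h3 yY.
by rewrite actF_gen // size_block p5.
Qed.

Unset Implicit Arguments. Set Strict Implicit.

Theorem mainTheorem6 (R : comPzRingType) :
  (* N ix a left As-module map *)
  (forall (b : basisF) (cs : seq nat),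
      valid_basis b -> all (fun c => (0 < c)%N) cs -> size cs = sumn b.1 ->
      NF R (actF cs b) =f flift (fun b' => [:: (1 : R, actF cs b')]) (NF R b))
  (* f_n . N = 0 *)
  /\ (forall n : nat, (0 < n)%N -> NF R (gen [:: n]) =f [::])
  (* (i) *)
  /\ (forall ix : seq nat,
        (1 < size ix)%N -> all (fun i => (0 < i)%N) ix -> (2 < last 0%N ix)%N ->
        NF R (gen ix) =f [::])
  (* (ii) *)
  /\ (forall (js : seq nat) (a : nat),
        all (fun i => (0 < i)%N) js -> (0 < a)%N ->
        NF R (gen (js ++ [:: a; 2%N]))
          =f [:: (1, (rcons (nseq (sumn js + a) 1%N) 2%N, rcons js a.+1))])
  (* (iii) *)
  /\ (forall (js : seq nat) (a : nat),
        all (fun i => (0 < i)%N) js -> (1 < a)%N ->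
        NF R (gen (js ++ [:: a; 1%N]))
          =f [:: (1, (rcons (nseq (sumn js + a - 1) 1%N) 2%N, rcons js a))])
  (* (iv) *)
  /\ (forall js : seq nat,
        all (fun i => (0 < i)%N) js -> ~~ all (fun i => (i == 1)%N) js ->
        NF R (gen (js ++ [:: 1%N; 1%N]))
          =f [:: (1, (rcons (nseq (sumn js) 1%N) 2%N, rcons js 1%N))])
  (* (v) *)
  /\ (forall k : nat, (1 < k)%N ->
        NF R (gen (nseq k 1%N))
          =f [:: (1, (rcons (nseq (k - 2) 1%N) 2%N, nseq (k - 1) 1%N));
                 (-1, ([:: k], [:: 1%N]))])
  (* consequence: Fbar_1^(q) . N  ix contained in  Fbar_1^(q-1) *)
  /\ (forall (q : nat) (x : fsum R basisF),
        (0 < q)%N -> inFq q x -> inFq q.-1 (flift (NF R) x)).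
Proof.
split; first by move=> b cs _ _ _; exact: conj1.
split; first exact: conj2.
split; first exact: conj3.
split; first exact: conj4.
split; first exact: conj5.
split; first exact: conj6.
split; first exact: conj7.
exact: conj8.
Qed.
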